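(* Let $\lambda_1,\lambda_2,\lambda_3$ be pairwise distinct nonzero complex numbers, $J_1=\mathrm{diag}(\lambda_1,\lambda_2,\lambda_3)$, and $h>0$. Define $$T_1=\lambda_1(e^{\lambda_2h}-e^{\lambda_3h})+\lambda_2(e^{\lambda_3h}-e^{\lambda_1h})+\lambda_3(e^{\lambda_1h}-e^{\lambda_2h}),$$ $$T_2=\lambda_1(1-e^{\lambda_1h})(e^{\lambda_2h}-e^{\lambda_3h})+\lambda_2(1-e^{\lambda_2h})(e^{\lambda_3h}-e^{\lambda_1h})+\lambda_3(1-e^{\lambda_3h})(e^{\lambda_1h}-e^{\lambda_2h}),$$ $C_1=\lambda_2-\lambda_1+\lambda_1e^{\lambda_1h}-\lambda_2e^{\lambda_2h}$, and $$\theta=\frac{T_1}{T_2},\qquad \phi=\frac{e^{\lambda_1h}-e^{\lambda_2h}}{\lambda_1-\lambda_2+\theta C_1},\qquad \psi=e^{\lambda_3h}-\phi\lambda_3\big(\theta e^{\lambda_3h}+1-\theta\big).$$ Then (whenever these expressions are defined and the scheme is uniquely solvable for $\mathbf{x}_{k+1}$) the difference scheme $$\frac{\mathbf{x}_{k+1}-\psi\mathbf{x}_k}{\phi}=J_1\big[\theta\mathbf{x}_{k+1}+(1-\theta)\mathbf{x}_k\big]$$ is exact for the system $\mathbf{x}'=J_1\mathbf{x}$, $\mathbf{x}(t)=(x(t),y(t),z(t))^T$.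
   Context: A one-step difference scheme with step size $h>0$ for $\mathbf{x}'=M\mathbf{x}$ is called exact if for every initial vector $\mathbf{x}_0$ the sequence $(\mathbf{x}_k)$ it generates satisfies $\mathbf{x}_k=\mathbf{x}(kh)$ for all $k\ge 0$, where $\mathbf{x}(t)$ solves $\mathbf{x}'=M\mathbf{x}$, $\mathbf{x}(0)=\mathbf{x}_0$. *)

(* Defs.v *)
From Stdlib Require Export Reals.
From Coquelicot Require Export Coquelicot.

Open Scope C_scope.

Definition cexp (z : C) : C :=
  (exp (Re z) * cos (Im z), exp (Re z) * sin (Im z))%R.

Definition vec3 : Type := (C * C * C)%type.

Definition vadd (v w : vec3) : vec3 :=
  let '(a1, a2, a3) := v in let '(b1, b2, b3) := w in (a1 + b1, a2 + b2, a3 + b3).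
Definition vscale (c : C) (v : vec3) : vec3 :=
  let '(a1, a2, a3) := v in (c * a1, c * a2, c * a3).
Definition vsub (v w : vec3) : vec3 := vadd v (vscale (-1) w).

Definition diag3 (l1 l2 l3 : C) (v : vec3) : vec3 :=
  let '(a1, a2, a3) := v in (l1 * a1, l2 * a2, l3 * a3).

Section Coeffs.
Variables (l1 l2 l3 : C) (h : R).
Let e1 := cexp (l1 * RtoC h).
Let e2 := cexp (l2 * RtoC h).
Let e3 := cexp (l3 * RtoC h).

Definition T1 : C := l1 * (e2 - e3) + l2 * (e3 - e1) + l3 * (e1 - e2).
Definition T2 : C :=
  l1 * (1 - e1) * (e2 - e3) + l2 * (1 - e2) * (e3 - e1) + l3 * (1 - e3) * (e1 - e2).
Definition C1 : C := l2 - l1 + l1 * e1 - l2 * e2.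
Definition theta : C := T1 / T2.
Definition phi_den : C := l1 - l2 + theta * C1.
Definition phi : C := (e1 - e2) / phi_den.
Definition psi : C := e3 - phi * l3 * (theta * e3 + 1 - theta).

Definition scheme_step (xk xk1 : vec3) : Prop :=
  vscale (/ phi) (vsub xk1 (vscale psi xk))
  = diag3 l1 l2 l3 (vadd (vscale theta xk1) (vscale (1 - theta) xk)).
End Coeffs.

(* Main.v *)
Require Import Defs.
From Stdlib Require Import Lra.

Lemma deriv_fst {U V : NormedModule R_AbsRing} (f : R -> U * V) t a b :
  is_derive f t (a, b) -> is_derive (fun t => fst (f t)) t a.
Proof.
  intros H. unfold is_derive in *.
  apply filterdiff_ext_lin with (fun y => fst (scal y (a, b))).
  - apply (filterdiff_comp' f (fun p : U * V => fst p) t _ (fun p : U * V => fst p) H).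
    apply filterdiff_linear, is_linear_fst.
  - intros y; reflexivity.
Qed.

Lemma deriv_snd {U V : NormedModule R_AbsRing} (f : R -> U * V) t a b :
  is_derive f t (a, b) -> is_derive (fun t => snd (f t)) t b.
Proof.
  intros H. unfold is_derive in *.
  apply filterdiff_ext_lin with (fun y => snd (scal y (a, b))).
  - apply (filterdiff_comp' f (fun p : U * V => snd p) t _ (fun p : U * V => snd p) H).
    apply filterdiff_linear, is_linear_snd.
  - intros y; reflexivity.
Qed.

Lemma const_zero (f : R -> R) : (forall t, is_derive f t 0%R) -> forall t, f t = f 0%R.
Proof.
  intros H t. destruct (Rtotal_order t 0) as [Ht|[Ht|Ht]].
  - apply (eq_is_derive f t 0); [intros; apply H | exact Ht].
  - subst; reflexivity.
  - symmetry; apply (eq_is_derive f 0 t); [intros; apply H | exact Ht].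
Qed.

Lemma ode_real (a b : R -> R) (p q : R) :
  (forall t, is_derive a t (p * a t - q * b t)%R) ->
  (forall t, is_derive b t (q * a t + p * b t)%R) ->
  forall t, a t = (exp (p * t) * (cos (q * t) * a 0 - sin (q * t) * b 0))%R /\
            b t = (exp (p * t) * (sin (q * t) * a 0 + cos (q * t) * b 0))%R.
Proof.
  intros Ha Hb.
  set (u := fun t => (exp (- p * t) * (cos (q * t) * a t + sin (q * t) * b t))%R).
  set (v := fun t => (exp (- p * t) * (cos (q * t) * b t - sin (q * t) * a t))%R).
  assert (Hu : forall t, is_derive u t 0%R).
  { intros t. unfold u. auto_derive.
    - split; [exists (p * a t - q * b t)%R; apply Ha|].
      split; [exists (q * a t + p * b t)%R; apply Hb| easy].
    - replace (Derive (fun x => a x) t) with (p * a t - q * b t)%R by (symmetry; apply is_derive_unique; apply Ha).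
      replace (Derive (fun x => b x) t) with (q * a t + p * b t)%R by (symmetry; apply is_derive_unique; apply Hb). ring. }
  assert (Hv : forall t, is_derive v t 0%R).
  { intros t. unfold v. auto_derive.
    - split; [exists (q * a t + p * b t)%R; apply Hb|].
      split; [exists (p * a t - q * b t)%R; apply Ha| easy].
    - replace (Derive (fun x => a x) t) with (p * a t - q * b t)%R by (symmetry; apply is_derive_unique; apply Ha).
      replace (Derive (fun x => b x) t) with (q * a t + p * b t)%R by (symmetry; apply is_derive_unique; apply Hb). ring. }
  intros t.
  pose proof (const_zero u Hu t) as U. pose proof (const_zero v Hv t) as W.
  unfold u, v in U, W. 
  rewrite !Rmult_0_r, exp_0, cos_0, sin_0 in U, W.
  assert (He : (exp (p * t) * exp (- p * t) = 1)%R).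
  { rewrite <- exp_plus. replace (p * t + - p * t)%R with 0%R by ring. apply exp_0. }
  pose proof (sin2_cos2 (q * t)) as SC. unfold Rsqr in SC.
  split.
  - transitivity (exp (p * t) * (cos (q*t) * (exp (- p * t) * (cos (q * t) * a t + sin (q * t) * b t)) - sin (q*t) * (exp (- p * t) * (cos (q * t) * b t - sin (q * t) * a t))))%R.
    + replace (a t) with (a t * (exp (p * t) * exp (- p * t)) * (sin (q * t) * sin (q * t) + cos (q * t) * cos (q * t)))%R at 1 by (rewrite He, SC; ring). ring.
    + rewrite U, W. ring.
  - transitivity (exp (p * t) * (sin (q*t) * (exp (- p * t) * (cos (q * t) * a t + sin (q * t) * b t)) + cos (q*t) * (exp (- p * t) * (cos (q * t) * b t - sin (q * t) * a t))))%R.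
    + replace (b t) with (b t * (exp (p * t) * exp (- p * t)) * (sin (q * t) * sin (q * t) + cos (q * t) * cos (q * t)))%R at 1 by (rewrite He, SC; ring). ring.
    + rewrite U, W. ring.
Qed.

Lemma key_abs (l1 l2 l3 e1 e2 e3 th D ph ps : C) :
  l1 * (1 - e1) * (e2 - e3) + l2 * (1 - e2) * (e3 - e1) + l3 * (1 - e3) * (e1 - e2) <> 0 ->
  th = (l1 * (e2 - e3) + l2 * (e3 - e1) + l3 * (e1 - e2)) /
       (l1 * (1 - e1) * (e2 - e3) + l2 * (1 - e2) * (e3 - e1) + l3 * (1 - e3) * (e1 - e2)) ->
  D = l1 - l2 + th * (l2 - l1 + l1 * e1 - l2 * e2) -> D <> 0 ->
  ph = (e1 - e2) / D -> ps = e3 - ph * l3 * (th * e3 + 1 - th) ->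
  ps = e1 - ph * l1 * (th * e1 + 1 - th) /\ ps = e2 - ph * l2 * (th * e2 + 1 - th).
Proof.
  intros HT Hth HD HD0 Hph Hps.
  assert (E1 : (e1 - e3) * D = (e1 - e2) * (l1 * (th * e1 + 1 - th) - l3 * (th * e3 + 1 - th))).
  { rewrite HD, Hth. field. exact HT. }
  assert (E2 : (e2 - e3) * D = (e1 - e2) * (l2 * (th * e2 + 1 - th) - l3 * (th * e3 + 1 - th))).
  { rewrite HD, Hth. field. exact HT. }
  split; apply Ceq_minus; rewrite Hps, Hph.
  - transitivity (((e1 - e2) * (l1 * (th * e1 + 1 - th) - l3 * (th * e3 + 1 - th)) - (e1 - e3) * D) / D).
    + field. exact HD0.
    + rewrite E1. field. exact HD0.
  - transitivity (((e1 - e2) * (l2 * (th * e2 + 1 - th) - l3 * (th * e3 + 1 - th)) - (e2 - e3) * D) / D).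
    + field. exact HD0.
    + rewrite E2. field. exact HD0.
Qed.

Lemma cexp_lin (l : C) (t : R) :
  cexp (l * RtoC t) = (exp (fst l * t) * cos (snd l * t), exp (fst l * t) * sin (snd l * t))%R.
Proof.
  destruct l as [p q]. unfold cexp, RtoC, Cmult, Re, Im; simpl.
  replace (p * t - q * 0)%R with (p * t)%R by ring.
  replace (p * 0 + q * t)%R with (q * t)%R by ring. reflexivity.
Qed.

Lemma cexp_add (l : C) (s t : R) :
  cexp (l * RtoC (s + t)) = cexp (l * RtoC s) * cexp (l * RtoC t).
Proof.
  rewrite !cexp_lin. destruct l as [p q]; simpl.
  rewrite !Rmult_plus_distr_l, exp_plus, cos_plus, sin_plus.
  unfold Cmult; simpl. f_equal; ring.
Qed.

Lemma ode_comp (z : R -> C) (l : C) :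
  (forall t, is_derive z t (l * z t)) -> forall t, z t = cexp (l * RtoC t) * z 0%R.
Proof.
  intros H.
  set (a := fun t => fst (z t)). set (b := fun t => snd (z t)).
  destruct l as [p q].
  assert (Ha : forall t, is_derive a t (p * a t - q * b t)%R).
  { intros t. pose proof (H t) as Ht.
    exact (deriv_fst (U := R_NormedModule) (V := R_NormedModule) z t _ _ Ht). }
  assert (Hb : forall t, is_derive b t (q * a t + p * b t)%R).
  { intros t. pose proof (H t) as Ht.
    pose proof (deriv_snd (U := R_NormedModule) (V := R_NormedModule) z t _ _ Ht) as K.
    eapply is_derive_ext; [intros; reflexivity|]. 
    replace (q * a t + p * b t)%R with (p * b t + q * a t)%R by ring. exact K. }
  intros t. destruct (ode_real a b p q Ha Hb t) as [E1 E2].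
  rewrite cexp_lin. simpl.
  rewrite (surjective_pairing (z t)), (surjective_pairing (z 0%R)).
  change (fst (z t)) with (a t). change (snd (z t)) with (b t).
  change (fst (z 0%R)) with (a 0%R). change (snd (z 0%R)) with (b 0%R).
  rewrite E1, E2. unfold Cmult; simpl. f_equal; ring.
Qed.

Theorem theorem4 (l1 l2 l3 : C) (h : R) :
  l1 <> 0 -> l2 <> 0 -> l3 <> 0 ->
  l1 <> l2 -> l2 <> l3 -> l1 <> l3 ->
  (0 < h)%R ->
  (* the expressions are defined *)
  T2 l1 l2 l3 h <> 0 ->
  phi_den l1 l2 l3 h <> 0 ->
  phi l1 l2 l3 h <> 0 ->
  (* the scheme is uniquely solvable for x_{k+1} *)
  (forall v : vec3, exists! w : vec3, scheme_step l1 l2 l3 h v w) ->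
  (* exactness *)
  forall (x0 : vec3) (xs : nat -> vec3) (sol : R -> vec3),
    xs O = x0 ->
    (forall k, scheme_step l1 l2 l3 h (xs k) (xs (S k))) ->
    sol 0%R = x0 ->
    (forall t : R, is_derive sol t (diag3 l1 l2 l3 (sol t))) ->
    forall k : nat, xs k = sol (INR k * h)%R.
Proof.
  intros _ _ _ _ _ _ _ HT2 HD Hph Huniq x0 xs sol Hx0 Hstep Hsol0 Hsol.
  set (s1 := fun t => fst (fst (sol t))).
  set (s2 := fun t => snd (fst (sol t))).
  set (s3 := fun t => snd (sol t)).
  assert (Hd : forall t, is_derive sol t ((l1 * s1 t, l2 * s2 t), l3 * s3 t)).
  { intros t. pose proof (Hsol t) as K. unfold s1, s2, s3.
    destruct (sol t) as [[y1 y2] y3]. exact K. }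
  assert (D12 : forall t, is_derive (fun t => fst (sol t)) t (l1 * s1 t, l2 * s2 t)).
  { intros t. exact (deriv_fst sol t _ _ (Hd t)). }
  assert (F1 : forall t, s1 t = cexp (l1 * RtoC t) * s1 0%R).
  { apply ode_comp. intros t. exact (deriv_fst (fun t => fst (sol t)) t _ _ (D12 t)). }
  assert (F2 : forall t, s2 t = cexp (l2 * RtoC t) * s2 0%R).
  { apply ode_comp. intros t. exact (deriv_snd (fun t => fst (sol t)) t _ _ (D12 t)). }
  assert (F3 : forall t, s3 t = cexp (l3 * RtoC t) * s3 0%R).
  { apply ode_comp. intros t. exact (deriv_snd sol t _ _ (Hd t)). }
  set (e1 := cexp (l1 * RtoC h)). set (e2 := cexp (l2 * RtoC h)). set (e3 := cexp (l3 * RtoC h)).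
  destruct (key_abs l1 l2 l3 e1 e2 e3 (theta l1 l2 l3 h) (phi_den l1 l2 l3 h)
             (phi l1 l2 l3 h) (psi l1 l2 l3 h) HT2 eq_refl eq_refl HD eq_refl eq_refl) as [K1 K2].
  assert (K3 : psi l1 l2 l3 h = e3 - phi l1 l2 l3 h * l3 * (theta l1 l2 l3 h * e3 + 1 - theta l1 l2 l3 h)) by reflexivity.
  assert (Hnext : forall t, sol (t + h)%R = ((e1 * s1 t, e2 * s2 t), e3 * s3 t)).
  { intros t. rewrite (surjective_pairing (sol (t + h)%R)), (surjective_pairing (fst (sol (t + h)%R))).
    change (fst (fst (sol (t + h)%R))) with (s1 (t + h)%R).
    change (snd (fst (sol (t + h)%R))) with (s2 (t + h)%R).
    change (snd (sol (t + h)%R)) with (s3 (t + h)%R).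
    rewrite F1, F2, F3, (F1 t), (F2 t), (F3 t), !cexp_add.
    unfold e1, e2, e3. f_equal; [f_equal|]; ring. }
  assert (Hss : forall v, scheme_step l1 l2 l3 h v ((e1 * fst (fst v), e2 * snd (fst v)), e3 * snd v)).
  { intros [[v1 v2] v3]. unfold scheme_step.
    cbv beta iota delta [vsub vadd vscale diag3 fst snd].
    f_equal; [f_equal|].
    - rewrite K1. field. exact Hph.
    - rewrite K2. field. exact Hph.
    - rewrite K3. field. exact Hph. }
  induction k as [|k IH].
  - simpl. rewrite Rmult_0_l, Hx0, Hsol0. reflexivity.
  - destruct (Huniq (xs k)) as [w [Hw Hu]].
    rewrite <- (Hu _ (Hstep k)).
    replace (INR (S k) * h)%R with (INR k * h + h)%R by (rewrite S_INR; ring).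
    rewrite Hnext. apply Hu.
    rewrite IH. unfold s1, s2, s3. apply Hss.
Qed.
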